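(* Let $k$ be a positive even integer. There exist positive constants $N_0,C_k,A_k$ such that for all $N>N_0$ and all $t=e^z$ on the minor arc $C''_N$ we have \[ |F_k(t)|<C_k\,N^{A_k}. \]
   Context: Let $M_0(t,q)=\prod_{m\geq1}\prod_{j=0}^{m-1}\frac{1}{1-q^{2j+1-m}t^m}$, let $\partial=q\frac{d}{dq}$, and define $M_k(t)=\partial^k M_0(t,q)\big|_{q=1}$. Let $M(t)=\prod_{m\geq1}(1-t^m)^{-m}$ be MacMahon's function, and define $F_k(t)$ by $M_k(t)=F_k(t)\cdot M(t)$ (for $|t|<1$). For $N>0$, $C_N$ is the circle $|t|=e^{-1/N}$; writing $t=e^z$ with $\operatorname{Re}z=-1/N$ and $\operatorname{Im}z\in(-\pi,\pi]$, the major arc $C'_N$ consists of the points with $|\operatorname{Im}z|<1/N$, and the minor arc $C''_N$ is $C_N\setminus C'_N$. *)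

(* Defs.v *)
From Stdlib Require Import Reals ZArith ClassicalEpsilon.
From Coquelicot Require Import Coquelicot.
Open Scope R_scope.

Fixpoint prodC (f : nat -> C) (n : nat) : C :=
  match n with
  | O => 1%C
  | S n' => (prodC f n' * f n')%C
  end.

Definition zpowC (q : C) (e : Z) : C :=
  match e with
  | Z0 => 1%C
  | Zpos p => Cpow q (Pos.to_nat p)
  | Zneg p => Cinv (Cpow q (Pos.to_nat p))
  end.

(* the limit of a complex sequence (if it converges; an arbitrary value otherwise) *)
Definition seq_limC (u : nat -> C) : C :=
  epsilon (inhabits (RtoC 0)) (fun l : C => filterlim u eventually (locally l)).

Definition M0_partial (t q : C) (n : nat) : C :=
  prodC (fun i => let m := S i in
           prodC (fun j => Cinv (1 - zpowC q (2 * Z.of_nat j + 1 - Z.of_nat m)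
                                        * Cpow t m)%C) m) n.

Definition M0 (t q : C) : C := seq_limC (M0_partial t q).

Definition qD (f : C -> C) : C -> C := fun q => (q * C_derive f q)%C.

Definition Mk (k : nat) (t : C) : C := Nat.iter k qD (fun q => M0 t q) 1%C.

Definition MacMahon (t : C) : C :=
  seq_limC (prodC (fun i => Cinv (Cpow (1 - Cpow t (S i)) (S i))%C)).

Definition Fk (k : nat) (t : C) : C := (Mk k t / MacMahon t)%C.

Definition cexp_xy (x y : R) : C := (exp x * cos y, exp x * sin y).

(* Main.v *)
Require Import Defs.
From Stdlib Require Import Reals ZArith.
From Coquelicot Require Import Coquelicot.
Open Scope R_scope.
From Stdlib Require Import Lra Lia ClassicalEpsilon FunctionalExtensionality.

Definition hasD (f : R -> C) (x : R) (d : C) :=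
  is_derive (fun y => fst (f y)) x (fst d) /\ is_derive (fun y => snd (f y)) x (snd d).

Lemma is_derive_eq (f : R -> R) x l l' : is_derive f x l -> l = l' -> is_derive f x l'.
Proof. intros H ->; exact H. Qed.

Lemma hasD_plus f g x df dg : hasD f x df -> hasD g x dg ->
  hasD (fun y => f y + g y)%C x (df + dg)%C.
Proof.
  intros [H1 H2] [H3 H4]; split; simpl.
  - apply (is_derive_plus (fun y => fst (f y)) (fun y => fst (g y))); auto.
  - apply (is_derive_plus (fun y => snd (f y)) (fun y => snd (g y))); auto.
Qed.

Lemma hasD_mult f g x df dg : hasD f x df -> hasD g x dg ->
  hasD (fun y => f y * g y)%C x (df * g x + f x * dg)%C.
Proof.
  intros [H1 H2] [H3 H4].
  assert (A1 := is_derive_mult (fun y => fst (f y)) (fun y => fst (g y)) x _ _ H1 H3 Rmult_comm).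
  assert (A2 := is_derive_mult (fun y => snd (f y)) (fun y => snd (g y)) x _ _ H2 H4 Rmult_comm).
  assert (A3 := is_derive_mult (fun y => fst (f y)) (fun y => snd (g y)) x _ _ H1 H4 Rmult_comm).
  assert (A4 := is_derive_mult (fun y => snd (f y)) (fun y => fst (g y)) x _ _ H2 H3 Rmult_comm).
  split; simpl.
  - eapply is_derive_eq.
    apply (is_derive_minus _ _ _ _ _ A1 A2).
    unfold minus, plus, opp, mult; simpl. ring.
  - eapply is_derive_eq.
    apply (is_derive_plus _ _ _ _ _ A3 A4).
    unfold minus, plus, opp, mult; simpl. ring.
Qed.

Lemma isd_const (c x : R) : is_derive (fun _ : R => c) x 0.
Proof. exact (is_derive_const (K:=R_AbsRing) (V:=R_NormedModule) c x). Qed.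

Lemma hasD_const (c : C) x : hasD (fun _ => c) x 0%C.
Proof. split; simpl; apply isd_const. Qed.

Lemma hasD_ext f g x d : (forall y, f y = g y) -> hasD f x d -> hasD g x d.
Proof.
  intros E [H1 H2]; split.
  - eapply is_derive_ext. 2: exact H1. intros; simpl; now rewrite E.
  - eapply is_derive_ext. 2: exact H2. intros; simpl; now rewrite E.
Qed.

Lemma hasD_ext_loc f g x d lo hi : lo < x < hi ->
  (forall y, lo < y < hi -> f y = g y) -> hasD f x d -> hasD g x d.
Proof.
  intros Hx E [H1 H2].
  assert (L : locally x (fun y => lo < y < hi)).
  { assert (0 < Rmin (x - lo) (hi - x)) as Hp.
    { apply Rmin_case; lra. }
    exists (mkposreal _ Hp). intros y Hy.
    unfold ball in Hy; simpl in Hy; unfold AbsRing_ball, abs, minus, plus, opp in Hy; simpl in Hy.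
    apply Rabs_lt_between in Hy. destruct Hy as [Hy1 Hy2].
    pose proof (Rmin_l (x-lo) (hi-x)); pose proof (Rmin_r (x-lo) (hi-x)). simpl in *. lra. }
  split.
  - eapply is_derive_ext_loc. 2: exact H1.
    eapply filter_imp. 2: exact L. intros y Hy; simpl; now rewrite E.
  - eapply is_derive_ext_loc. 2: exact H2.
    eapply filter_imp. 2: exact L. intros y Hy; simpl; now rewrite E.
Qed.

Lemma hasD_RtoC (g : R -> R) x d : is_derive g x d -> hasD (fun y => RtoC (g y)) x (RtoC d).
Proof. intros H; split; simpl; auto. apply isd_const. Qed.

Lemma hasD_inv f x df : hasD f x df -> f x <> 0%C ->
  hasD (fun y => / f y)%C x (- df * (/ f x) * (/ f x))%C.
Proof.
  intros [H1 H2] Hnz.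
  destruct (f x) as [a b] eqn:Ef.
  assert (Hd : a ^ 2 + b ^ 2 <> 0).
  { intro E. apply Hnz.
    assert (a = 0). { apply (Rplus_sqr_eq_0_l a b). unfold Rsqr; rewrite <- E; ring. }
    assert (b = 0). { apply (Rplus_sqr_eq_0_l b a). unfold Rsqr; rewrite <- E; ring. }
    subst. reflexivity. }
  pose proof (is_derive_pow (fun y => fst (f y)) 2 x _ H1) as A.
  pose proof (is_derive_pow (fun y => snd (f y)) 2 x _ H2) as B.
  pose proof (is_derive_plus _ _ _ _ _ A B) as S0.
  assert (S : is_derive (fun y => fst (f y) ^ 2 + snd (f y) ^ 2) x (2 * a * fst df + 2 * b * snd df)).
  { eapply is_derive_eq. exact S0. cbv beta. rewrite Ef. unfold plus; simpl. ring. }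
  assert (Hg : fst (f x) ^ 2 + snd (f x) ^ 2 <> 0).
  { rewrite Ef. exact Hd. }
  pose proof (is_derive_div (fun y => fst (f y)) (fun y => fst (f y) ^ 2 + snd (f y) ^ 2) _ _ _ H1 S Hg) as D1.
  pose proof (is_derive_opp _ _ _ H2) as H2'.
  pose proof (is_derive_div (fun y => opp (snd (f y))) (fun y => fst (f y) ^ 2 + snd (f y) ^ 2) _ _ _ H2' S Hg) as D2.
  split.
  - eapply is_derive_eq. exact D1.
    cbv beta. rewrite Ef. destruct df as [d1 d2]. unfold plus, opp; simpl. field. simpl in Hd; lra.
  - eapply is_derive_eq. eapply is_derive_ext. 2: exact D2. intros y; simpl. unfold opp; simpl. reflexivity.
    cbv beta. rewrite Ef. destruct df as [d1 d2]. unfold plus, opp; simpl. field. simpl in Hd; lra.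
Qed.

Definition limC (u : nat -> C) : C :=
  (real (Lim_seq (fun n => fst (u n))), real (Lim_seq (fun n => snd (u n)))).

Definition UC (s : nat -> R -> C) (D : R -> Prop) :=
  CVU_cauchy (fun n x => fst (s n x)) D /\ CVU_cauchy (fun n x => snd (s n x)) D.

Lemma cauchy_lim (fn : nat -> R -> R) (D : R -> Prop) x : CVU_cauchy fn D -> D x ->
  is_lim_seq (fun n => fn n x) (real (Lim_seq (fun n => fn n x))).
Proof.
  intros H Dx.
  apply CVU_dom_cauchy in H. apply CVU_CVS_dom in H.
  specialize (H x Dx).
  pose proof (Lim_seq_correct' _ H) as L.
  destruct H as [l Hl]. rewrite (is_lim_seq_unique _ _ Hl). simpl. exact Hl.
Qed.

Lemma diffq_lim (g : R -> R) x d : is_derive g x d ->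
  is_lim_seq (fun n => (g (Rbar_loc_seq x n) - g x) / (Rbar_loc_seq x n - x)) d.
Proof.
  intros H. apply is_derive_Reals in H.
  apply is_lim_seq_spec. intros eps.
  destruct (H eps (cond_pos eps)) as [delta Hd].
  pose proof (is_lim_seq_Rbar_loc_seq x) as L. apply is_lim_seq_spec in L.
  specialize (L delta). simpl in L.
  eapply filter_imp. 2: exact L. intros n Hn. simpl in *.
  assert (Hp : 0 < / (INR n + 1)).
  { apply Rinv_0_lt_compat. pose proof (pos_INR n). lra. }
  replace (x + / (INR n + 1) - x) with (/ (INR n + 1)) in * by ring.
  specialize (Hd (/ (INR n + 1))). apply Hd. lra. exact Hn.
Qed.

Lemma fst_div_real (z : C) y x : y <> x -> fst (z / ((y,0) - (x,0)))%C = fst z / (y - x).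
Proof.
  intros H. destruct z as [a b]. unfold Cdiv, Cminus, Cinv, Cmult, Cplus, Copp; simpl.
  field. lra.
Qed.
Lemma snd_div_real (z : C) y x : y <> x -> snd (z / ((y,0) - (x,0)))%C = snd z / (y - x).
Proof.
  intros H. destruct z as [a b]. unfold Cdiv, Cminus, Cinv, Cmult, Cplus, Copp; simpl.
  field. lra.
Qed.

Lemma loc_seq_in lo hi x : lo < x < hi -> eventually (fun n => lo < Rbar_loc_seq x n < hi /\ Rbar_loc_seq x n <> x).
Proof.
  intros Hx.
  pose proof (is_lim_seq_Rbar_loc_seq x) as L. apply is_lim_seq_spec in L.
  assert (Hp : 0 < Rmin (x - lo) (hi - x)) by (apply Rmin_case; lra).
  specialize (L (mkposreal _ Hp)). simpl in L.
  eapply filter_imp. 2: exact L. intros n Hn. simpl in *.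
  assert (Hq : 0 < / (INR n + 1)).
  { apply Rinv_0_lt_compat. pose proof (pos_INR n). lra. }
  replace (x + / (INR n + 1) - x) with (/ (INR n + 1)) in * by ring.
  rewrite Rabs_pos_eq in Hn by lra.
  pose proof (Rmin_l (x-lo) (hi-x)); pose proof (Rmin_r (x-lo) (hi-x)). lra.
Qed.

Lemma C_derive_real (F : C -> C) (U : R -> C) lo hi x d :
  lo < x < hi -> (forall y, lo < y < hi -> F (y, 0) = U y) -> hasD U x d ->
  C_derive F (x, 0) = d.
Proof.
  intros Hx E [H1 H2].
  unfold C_derive, C_lim. simpl snd. destruct d as [d1 d2]. simpl in H1, H2.
  unfold Lim. change (fst (x, 0)) with x.
  f_equal.
  - rewrite (is_lim_seq_unique _ d1). reflexivity.
    eapply is_lim_seq_ext_loc. 2: apply (diffq_lim _ _ _ H1).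
    eapply filter_imp. 2: apply (loc_seq_in lo hi x Hx).
    intros n [Hn1 Hn2]. rewrite fst_div_real by auto.
    rewrite (E _ Hn1), (E x Hx). simpl. reflexivity.
  - rewrite (is_lim_seq_unique _ d2). reflexivity.
    eapply is_lim_seq_ext_loc. 2: apply (diffq_lim _ _ _ H2).
    eapply filter_imp. 2: apply (loc_seq_in lo hi x Hx).
    intros n [Hn1 Hn2].
    rewrite (E _ Hn1), (E x Hx). set (h := Rbar_loc_seq x n) in *.
    assert (h - x <> 0) by lra. field. lra.
Qed.

Lemma locI lo hi x : lo < x < hi -> locally x (fun y => lo < y < hi).
Proof.
  intros Hx.
  assert (0 < Rmin (x - lo) (hi - x)) as Hp by (apply Rmin_case; lra).
  exists (mkposreal _ Hp). intros y Hy.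
  unfold ball in Hy; simpl in Hy; unfold AbsRing_ball, abs, minus, plus, opp in Hy; simpl in Hy.
  apply Rabs_lt_between in Hy. destruct Hy as [Hy1 Hy2].
  pose proof (Rmin_l (x-lo) (hi-x)); pose proof (Rmin_r (x-lo) (hi-x)). simpl in *. lra.
Qed.

Lemma CVU_cauchy_ext fn gn (D : R -> Prop) : (forall n x, D x -> fn n x = gn n x) ->
  CVU_cauchy fn D -> CVU_cauchy gn D.
Proof.
  intros E H eps. destruct (H eps) as [N HN]. exists N. intros n m x Dx Hn Hm.
  rewrite <- !E by auto. auto.
Qed.

Lemma CVU_cauchy_div fn (D : R -> Prop) lo : 0 < lo -> (forall x, D x -> lo <= x) ->
  CVU_cauchy fn D -> CVU_cauchy (fun n x => fn n x / x) D.
Proof.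
  intros Hlo Hx H eps.
  assert (Hp : 0 < eps * lo) by (apply Rmult_lt_0_compat; [apply cond_pos|lra]).
  destruct (H (mkposreal _ Hp)) as [N HN]. exists N. intros n m x Dx Hn Hm.
  specialize (HN n m x Dx Hn Hm). simpl in HN. specialize (Hx x Dx).
  replace (fn n x / x - fn m x / x) with ((fn n x - fn m x) / x) by (field; lra).
  unfold Rdiv. rewrite Rabs_mult, Rabs_inv, (Rabs_pos_eq x) by lra.
  apply (Rmult_lt_reg_r x). lra. rewrite Rmult_assoc, Rinv_l by lra.
  pose proof (cond_pos eps). nra.
Qed.

Lemma fst_div_R (z : C) y : y <> 0 -> fst (z / RtoC y)%C = fst z / y.
Proof. intros H. destruct z. unfold Cdiv, Cinv, Cmult, RtoC; simpl. field. auto. Qed.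
Lemma snd_div_R (z : C) y : y <> 0 -> snd (z / RtoC y)%C = snd z / y.
Proof. intros H. destruct z. unfold Cdiv, Cinv, Cmult, RtoC; simpl. field. auto. Qed.
Lemma mul_div_R (z : C) y : y <> 0 -> (RtoC y * (z / RtoC y))%C = z.
Proof. intros H. destruct z. unfold Cdiv, Cinv, Cmult, RtoC; simpl. f_equal; field; auto. Qed.

Lemma GEN_step (u v : nat -> R -> C) lo hi x :
  0 < lo -> lo < x < hi ->
  (forall n y, lo < y < hi -> hasD (u n) y (v n y / RtoC y)%C) ->
  (forall n y, lo < y < hi -> hasD (v n) y (v n y / RtoC y)%C \/ exists d, hasD (v n) y d) ->
  UC u (fun y => lo < y < hi) -> UC v (fun y => lo < y < hi) ->
  hasD (fun y => limC (fun n => u n y)) x (limC (fun n => v n x) / RtoC x)%C.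
Proof.
  intros Hlo Hx Hu Hv [U1 U2] [V1 V2].
  set (D := fun y => lo < y < hi).
  assert (oD : open D) by (apply open_and; [apply open_gt|apply open_lt]).
  assert (cD : is_connected D) by (intros a b z Ha Hb Hz; unfold D in *; lra).
  assert (Dlo : forall y, D y -> lo <= y) by (intros y Hy; unfold D in Hy; lra).
  assert (vder : forall n y, D y -> exists d, hasD (v n) y d).
  { intros n y Hy. destruct (Hv n y Hy) as [H|H]; eauto. }
  split; simpl.
  - assert (Dr : forall n y, D y -> Derive (fun y => fst (u n y)) y = fst (v n y) / y).
    { intros n y Hy. rewrite <- fst_div_R by (unfold D in Hy; lra).
      apply is_derive_unique. apply (Hu n y Hy). }
    pose proof (CVU_Derive (fun n y => fst (u n y)) D oD cD) as CD.
    assert (CV : CVU_dom (fun n y => fst (u n y)) D) by (apply CVU_dom_cauchy; exact U1).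
    assert (ED : forall n y, D y -> ex_derive (fun y => fst (u n y)) y).
    { intros n y Hy. eexists. apply (Hu n y Hy). }
    assert (CT : forall n y, D y -> continuity_pt (Derive (fun y => fst (u n y))) y).
    { intros n y Hy.
      apply continuity_pt_ext_loc with (f := fun y => fst (v n y) / y).
      { eapply filter_imp. 2: apply (locI lo hi y Hy). intros z Hz. rewrite Dr; auto. }
      apply continuity_pt_div.
      - apply (proj2 (continuity_pt_filterlim _ _)). apply (ex_derive_continuous (K:=R_AbsRing) (V:=R_NormedModule)).
        destruct (vder n y Hy) as [d [Hd1 Hd2]]. eexists; exact Hd1.
      - apply continuity_pt_id.
      - unfold D in Hy; lra. }
    assert (CVD : CVU_dom (fun n y => Derive (fun y => fst (u n y)) y) D).
    { apply CVU_dom_cauchy. eapply CVU_cauchy_ext.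
      2: apply (CVU_cauchy_div _ D lo Hlo Dlo V1).
      intros n y Hy. simpl. rewrite Dr; auto. }
    specialize (CD CV ED CT CVD x Hx).
    eapply is_derive_eq. exact CD.
    rewrite (Lim_seq_ext_loc _ (fun n => fst (v n x) / x)).
    2: { apply filter_forall. intros n. rewrite Dr; auto. }
    unfold Rdiv at 1. rewrite (is_lim_seq_unique _ _ (is_lim_seq_scal_r _ (/ x) _ (cauchy_lim _ D x V1 Hx))).
    simpl. field. lra.
  - assert (Dr : forall n y, D y -> Derive (fun y => snd (u n y)) y = snd (v n y) / y).
    { intros n y Hy. rewrite <- snd_div_R by (unfold D in Hy; lra).
      apply is_derive_unique. apply (Hu n y Hy). }
    pose proof (CVU_Derive (fun n y => snd (u n y)) D oD cD) as CD.
    assert (CV : CVU_dom (fun n y => snd (u n y)) D) by (apply CVU_dom_cauchy; exact U2).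
    assert (ED : forall n y, D y -> ex_derive (fun y => snd (u n y)) y).
    { intros n y Hy. eexists. apply (Hu n y Hy). }
    assert (CT : forall n y, D y -> continuity_pt (Derive (fun y => snd (u n y))) y).
    { intros n y Hy.
      apply continuity_pt_ext_loc with (f := fun y => snd (v n y) / y).
      { eapply filter_imp. 2: apply (locI lo hi y Hy). intros z Hz. rewrite Dr; auto. }
      apply continuity_pt_div.
      - apply (proj2 (continuity_pt_filterlim _ _)). apply (ex_derive_continuous (K:=R_AbsRing) (V:=R_NormedModule)).
        destruct (vder n y Hy) as [d [Hd1 Hd2]]. eexists; exact Hd2.
      - apply continuity_pt_id.
      - unfold D in Hy; lra. }
    assert (CVD : CVU_dom (fun n y => Derive (fun y => snd (u n y)) y) D).
    { apply CVU_dom_cauchy. eapply CVU_cauchy_ext.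
      2: apply (CVU_cauchy_div _ D lo Hlo Dlo V2).
      intros n y Hy. simpl. rewrite Dr; auto. }
    specialize (CD CV ED CT CVD x Hx).
    eapply is_derive_eq. exact CD.
    rewrite (Lim_seq_ext_loc _ (fun n => snd (v n x) / x)).
    2: { apply filter_forall. intros n. rewrite Dr; auto. }
    unfold Rdiv at 1. rewrite (is_lim_seq_unique _ _ (is_lim_seq_scal_r _ (/ x) _ (cauchy_lim _ D x V2 Hx))).
    simpl. field. lra.
Qed.

Lemma GEN (f : C -> C) (u : nat -> nat -> R -> C) lo hi :
  0 < lo ->
  (forall i n x, lo < x < hi -> hasD (u i n) x (u (S i) n x / RtoC x)%C) ->
  (forall i, UC (u i) (fun x => lo < x < hi)) ->
  (forall x, lo < x < hi -> f (RtoC x) = limC (fun n => u 0%nat n x)) ->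
  forall i x, lo < x < hi -> Nat.iter i qD f (RtoC x) = limC (fun n => u i n x).
Proof.
  intros Hlo Hd Hu H0 i. induction i as [|i IH]; intros x Hx.
  - simpl. auto.
  - simpl. unfold qD.
    rewrite (C_derive_real _ (fun y => limC (fun n => u i n y)) lo hi x
               (limC (fun n => u (S i) n x) / RtoC x)%C Hx).
    + apply mul_div_R. lra.
    + intros y Hy. apply IH. exact Hy.
    + apply (GEN_step _ _ lo hi); auto.
      intros n y Hy. right. eexists. apply Hd; auto.
Qed.

Inductive ex (A : Type) : Type :=
| At : A -> ex A | One : ex A | Zero : ex A
| Add : ex A -> ex A -> ex A | Mul : ex A -> ex A -> ex A.
Arguments At {A}. Arguments One {A}. Arguments Zero {A}. Arguments Add {A}. Arguments Mul {A}.

Fixpoint ev {A} (val : A -> C) (e : ex A) : C :=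
  match e with
  | At a => val a | One => 1%C | Zero => 0%C
  | Add e1 e2 => (ev val e1 + ev val e2)%C
  | Mul e1 e2 => (ev val e1 * ev val e2)%C
  end.

Fixpoint der {A} (d : A -> ex A) (e : ex A) : ex A :=
  match e with
  | At a => d a | One => Zero | Zero => Zero
  | Add e1 e2 => Add (der d e1) (der d e2)
  | Mul e1 e2 => Add (Mul (der d e1) e2) (Mul e1 (der d e2))
  end.

Lemma hasD_eq f x d d' : hasD f x d -> d = d' -> hasD f x d'.
Proof. intros H ->; exact H. Qed.

Lemma der_correct {A} (d : A -> ex A) (F : A -> R -> C) (lam : C) x :
  (forall a, hasD (F a) x (lam * ev (fun b => F b x) (d a))%C) ->
  forall e, hasD (fun y => ev (fun b => F b y) e) x (lam * ev (fun b => F b x) (der d e))%C.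
Proof.
  intros Ha e. induction e as [a| | |e1 IH1 e2 IH2|e1 IH1 e2 IH2]; simpl.
  - apply Ha.
  - eapply hasD_eq. apply hasD_const. ring.
  - eapply hasD_eq. apply hasD_const. ring.
  - eapply hasD_eq. apply (hasD_plus _ _ _ _ _ IH1 IH2). ring.
  - eapply hasD_eq. apply (hasD_mult _ _ _ _ _ IH1 IH2). ring.
Qed.

(* level 1 : atoms true = W, false = V *)
Fixpoint hasW (e : ex bool) : bool :=
  match e with
  | At a => a | One => false | Zero => true
  | Add e1 e2 => andb (hasW e1) (hasW e2)
  | Mul e1 e2 => orb (hasW e1) (hasW e2)
  end.

Definition dWV (a : bool) : ex bool :=
  if a then At true else Mul (At true) (Mul (At false) (At false)).

Lemma hasW_der e : hasW e = true -> hasW (der dWV e) = true.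
Proof.
  induction e as [a| | |e1 IH1 e2 IH2|e1 IH1 e2 IH2]; simpl; intros H; auto.
  - destruct a; simpl; auto.
  - apply andb_prop in H. destruct H. rewrite IH1, IH2; auto.
  - apply Bool.orb_prop in H. destruct H as [H|H].
    + rewrite IH1 by auto. rewrite H. simpl. reflexivity.
    + rewrite IH2 by auto. rewrite H. rewrite Bool.orb_true_r. simpl. apply Bool.orb_true_r.
Qed.

Lemma bound1 e : exists K b, 0 <= K /\ forall w v : C, Cmod w < 1 -> Cmod v <= / (1 - Cmod w) ->
  Cmod (ev (fun a : bool => if a then w else v) e) <=
    K * (if hasW e then Cmod w else 1) * (/ (1 - Cmod w)) ^ b.
Proof.
  induction e as [a| | |e1 IH1 e2 IH2|e1 IH1 e2 IH2].
  - exists 1, (if a then 0%nat else 1%nat). split; [lra|]. intros w v Hw Hv.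
    destruct a; simpl; lra.
  - exists 1, 0%nat. split; [lra|]. intros; simpl. rewrite Cmod_1. lra.
  - exists 0, 0%nat. split; [lra|]. intros; simpl. rewrite Cmod_0. lra.
  - destruct IH1 as [K1 [b1 [HK1 H1]]]. destruct IH2 as [K2 [b2 [HK2 H2]]].
    exists (K1 + K2), (b1 + b2)%nat. split; [lra|]. intros w v Hw Hv.
    specialize (H1 w v Hw Hv). specialize (H2 w v Hw Hv). simpl.
    set (q := / (1 - Cmod w)) in *.
    assert (Hq : 1 <= q).
    { unfold q. pose proof (Cmod_ge_0 w). rewrite <- Rinv_1. apply Rinv_le_contravar; lra. }
    assert (Q1 : q ^ b1 <= q ^ (b1 + b2)) by (apply Rle_pow; lia || lra).
    assert (Q2 : q ^ b2 <= q ^ (b1 + b2)) by (apply Rle_pow; lia || lra).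
    assert (Hq0 : 0 <= q ^ b1) by (apply pow_le; lra).
    assert (Hq0' : 0 <= q ^ b2) by (apply pow_le; lra).
    pose proof (Cmod_ge_0 w).
    assert (Hc1 : (if hasW e1 then Cmod w else 1) <= (if andb (hasW e1) (hasW e2) then Cmod w else 1)).
    { destruct (hasW e1), (hasW e2); simpl; lra. }
    assert (Hc2 : (if hasW e2 then Cmod w else 1) <= (if andb (hasW e1) (hasW e2) then Cmod w else 1)).
    { destruct (hasW e1), (hasW e2); simpl; lra. }
    assert (0 <= (if hasW e1 then Cmod w else 1)) by (destruct (hasW e1); lra).
    assert (0 <= (if hasW e2 then Cmod w else 1)) by (destruct (hasW e2); lra).
    set (c := (if andb (hasW e1) (hasW e2) then Cmod w else 1)) in *.
    set (c1 := (if hasW e1 then Cmod w else 1)) in *.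
    set (c2 := (if hasW e2 then Cmod w else 1)) in *.
    eapply Rle_trans. apply Cmod_triangle.
    assert (K1 * c1 * q ^ b1 <= K1 * c * q ^ (b1 + b2)).
    { apply Rmult_le_compat; [nra|lra| |lra]. apply Rmult_le_compat_l; lra. }
    assert (K2 * c2 * q ^ b2 <= K2 * c * q ^ (b1 + b2)).
    { apply Rmult_le_compat; [nra|lra| |lra]. apply Rmult_le_compat_l; lra. }
    nra.
  - destruct IH1 as [K1 [b1 [HK1 H1]]]. destruct IH2 as [K2 [b2 [HK2 H2]]].
    exists (K1 * K2), (b1 + b2)%nat. split; [nra|]. intros w v Hw Hv.
    specialize (H1 w v Hw Hv). specialize (H2 w v Hw Hv). simpl.
    rewrite Cmod_mult.
    set (q := / (1 - Cmod w)) in *.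
    pose proof (Cmod_ge_0 w).
    assert (Hq : 1 <= q).
    { unfold q. rewrite <- Rinv_1. apply Rinv_le_contravar; lra. }
    assert (Hq0 : 0 <= q ^ b1) by (apply pow_le; lra).
    assert (Hq0' : 0 <= q ^ b2) by (apply pow_le; lra).
    rewrite pow_add.
    assert (Hc : (if hasW e1 then Cmod w else 1) * (if hasW e2 then Cmod w else 1) <=
                 (if orb (hasW e1) (hasW e2) then Cmod w else 1)).
    { destruct (hasW e1), (hasW e2); simpl; nra. }
    assert (0 <= (if hasW e1 then Cmod w else 1)) by (destruct (hasW e1); lra).
    assert (0 <= (if hasW e2 then Cmod w else 1)) by (destruct (hasW e2); lra).
    eapply Rle_trans.
    apply Rmult_le_compat; [apply Cmod_ge_0|apply Cmod_ge_0|exact H1|exact H2].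
    set (c1 := (if hasW e1 then Cmod w else 1)) in *.
    set (c2 := (if hasW e2 then Cmod w else 1)) in *.
    set (c := (if orb (hasW e1) (hasW e2) then Cmod w else 1)) in *.
    replace (K1 * c1 * q ^ b1 * (K2 * c2 * q ^ b2)) with ((K1 * K2) * (q ^ b1 * q ^ b2) * (c1 * c2)) by ring.
    replace (K1 * K2 * c * (q ^ b1 * q ^ b2)) with ((K1 * K2) * (q ^ b1 * q ^ b2) * c) by ring.
    apply Rmult_le_compat_l; auto. apply Rmult_le_pos; [nra|nra].
Qed.

Lemma bound2 {T : Type} (val : T -> nat -> C) (Nf : T -> R) :
  (forall th, 1 <= Nf th) ->
  (forall j, exists c p, 0 <= c /\ forall th, Cmod (val th j) <= c * Nf th ^ p) ->
  forall e, exists c p, 0 <= c /\ forall th, Cmod (ev (val th) e) <= c * Nf th ^ p.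
Proof.
  intros HN Hj e. induction e as [a| | |e1 IH1 e2 IH2|e1 IH1 e2 IH2]; simpl.
  - apply Hj.
  - exists 1, 0%nat. split; [lra|]. intros; rewrite Cmod_1; simpl; lra.
  - exists 0, 0%nat. split; [lra|]. intros; rewrite Cmod_0; simpl; lra.
  - destruct IH1 as [c1 [p1 [Hc1 H1]]]. destruct IH2 as [c2 [p2 [Hc2 H2]]].
    exists (c1 + c2), (p1 + p2)%nat. split; [lra|]. intros th.
    specialize (H1 th). specialize (H2 th). specialize (HN th).
    assert (Q1 : Nf th ^ p1 <= Nf th ^ (p1 + p2)) by (apply Rle_pow; lia || lra).
    assert (Q2 : Nf th ^ p2 <= Nf th ^ (p1 + p2)) by (apply Rle_pow; lia || lra).
    eapply Rle_trans. apply Cmod_triangle. nra.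
  - destruct IH1 as [c1 [p1 [Hc1 H1]]]. destruct IH2 as [c2 [p2 [Hc2 H2]]].
    exists (c1 * c2), (p1 + p2)%nat. split; [nra|]. intros th.
    specialize (H1 th). specialize (H2 th). specialize (HN th).
    rewrite Cmod_mult, pow_add.
    replace (c1 * c2 * (Nf th ^ p1 * Nf th ^ p2)) with ((c1 * Nf th ^ p1) * (c2 * Nf th ^ p2)) by ring.
    apply Rmult_le_compat; auto; apply Cmod_ge_0.
Qed.

Fixpoint sumR (f : nat -> R) (n : nat) : R :=
  match n with O => 0 | S n' => sumR f n' + f n' end.
Fixpoint sumC (f : nat -> C) (n : nat) : C :=
  match n with O => 0%C | S n' => (sumC f n' + f n')%C end.

Lemma sumR_le f g n : (forall i, (i < n)%nat -> f i <= g i) -> sumR f n <= sumR g n.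
Proof.
  induction n; simpl; intros H. lra.
  assert (sumR f n <= sumR g n) by (apply IHn; intros; apply H; lia).
  specialize (H n ltac:(lia)). lra.
Qed.

Lemma sumR_nonneg f n : (forall i, (i < n)%nat -> 0 <= f i) -> 0 <= sumR f n.
Proof.
  intros H. replace 0 with (sumR (fun _ => 0) n).
  apply sumR_le; auto. clear H. induction n; simpl; auto. rewrite IHn. lra.
Qed.

Lemma sumR_scal c f n : sumR (fun i => c * f i) n = c * sumR f n.
Proof. induction n; simpl. ring. rewrite IHn. ring. Qed.

Lemma sumR_plus f g n : sumR (fun i => f i + g i) n = sumR f n + sumR g n.
Proof. induction n; simpl. ring. rewrite IHn. ring. Qed.

Lemma Cmod_sumC f n : Cmod (sumC f n) <= sumR (fun i => Cmod (f i)) n.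
Proof.
  induction n; simpl. rewrite Cmod_0. lra.
  eapply Rle_trans. apply Cmod_triangle. lra.
Qed.

Lemma pow_diff_le a b p : 0 <= b <= a -> a ^ S p - b ^ S p <= INR (S p) * (a - b) * a ^ p.
Proof.
  intros Hab. induction p.
  - simpl. lra.
  - assert (Hb : b ^ S p <= a ^ S p) by (apply pow_incr; lra).
    assert (E1 : a ^ S (S p) - b ^ S (S p) = a * (a ^ S p - b ^ S p) + b ^ S p * (a - b)) by (simpl; ring).
    assert (E2 : a ^ S p = a * a ^ p) by (simpl; ring).
    rewrite E1.
    assert (H1 : a * (a ^ S p - b ^ S p) <= a * (INR (S p) * (a - b) * a ^ p)).
    { apply Rmult_le_compat_l; lra. }
    assert (H2 : b ^ S p * (a - b) <= a ^ S p * (a - b)).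
    { apply Rmult_le_compat_r; lra. }
    replace (INR (S (S p))) with (INR (S p) + 1) by (rewrite (S_INR (S p)); ring).
    rewrite E2 in *. nra.
Qed.

Definition G (p : nat) (g : R) (n : nat) : R := sumR (fun i => INR (S i) ^ p * g ^ (S i)) n.

Lemma sumR_S f n : sumR f (S n) = sumR f n + f n.
Proof. reflexivity. Qed.

Lemma G_rec q g n : 0 <= g < 1 ->
  (1 - g) * G (S q) g n + INR n ^ S q * g ^ S n <= INR (S q) * G q g n.
Proof.
  intros Hg. induction n.
  - unfold G; simpl. lra.
  - unfold G in *. rewrite !sumR_S.
    set (A := sumR (fun i : nat => INR (S i) ^ S q * g ^ S i) n) in *.
    set (B := sumR (fun i : nat => INR (S i) ^ q * g ^ S i) n) in *.
    assert (Hpd := pow_diff_le (INR (S n)) (INR n) q).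
    assert (Hx : INR (S n) = INR n + 1) by apply S_INR.
    assert (0 <= INR n) by apply pos_INR.
    specialize (Hpd ltac:(lra)).
    set (x := INR (S n)) in *. set (y := INR n) in *. set (s := INR (S q)) in *.
    replace (x - y) with 1 in Hpd by lra.
    assert (Hgn : 0 <= g ^ S n) by (apply pow_le; lra).
    assert (E1 : g ^ S (S n) = g * g ^ S n) by (simpl; ring).
    rewrite E1.
    set (gn := g ^ S n) in *.
    set (X := x ^ S q) in *. set (Y := x ^ q) in *. set (Z := y ^ S q) in *.
    assert (K : (X - Z) * gn <= s * 1 * Y * gn) by (apply Rmult_le_compat_r; lra).
    replace ((1 - g) * (A + X * gn) + X * (g * gn)) with ((1 - g) * A + X * gn) by ring.
    replace (s * (B + Y * gn)) with (s * B + s * Y * gn) by ring.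
    replace ((X - Z) * gn) with (X * gn - Z * gn) in K by ring.
    replace (s * 1 * Y * gn) with (s * Y * gn) in K by ring.
    lra.
Qed.

Lemma G_bound p g n : 0 <= g < 1 -> G p g n <= INR (fact p) / (1 - g) ^ S p.
Proof.
  intros Hg. revert n. induction p; intros n.
  - unfold G. change (sumR (fun i => INR (S i) ^ 0 * g ^ S i) n) with (sumR (fun i => 1 * g ^ S i) n).
    assert (H0 : forall n, sumR (fun i => 1 * g ^ S i) n * (1 - g) = g - g ^ S n).
    { induction n0. simpl. ring. rewrite sumR_S. 
      replace ((sumR (fun i : nat => 1 * g ^ S i) n0 + 1 * g ^ S n0) * (1 - g)) with
        (sumR (fun i : nat => 1 * g ^ S i) n0 * (1 - g) + g ^ S n0 * (1 - g)) by ring.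
      rewrite IHn0. simpl. ring. }
    assert (H : sumR (fun i => 1 * g ^ S i) n * (1 - g) <= g).
    { rewrite H0. assert (0 <= g ^ S n) by (apply pow_le; lra). lra. }
    replace (INR (fact 0) / (1 - g) ^ 1) with (/ (1 - g)) by (simpl; field; lra).
    set (S0 := sumR (fun i => 1 * g ^ S i) n) in *.
    replace S0 with (S0 * (1 - g) * / (1 - g)) by (field; lra).
    rewrite <- (Rmult_1_l (/ (1 - g))) at 2.
    apply Rmult_le_compat_r. apply Rlt_le, Rinv_0_lt_compat; lra. lra.
  - pose proof (G_rec p g n Hg) as R1.
    assert (0 <= INR n ^ S p * g ^ S n).
    { apply Rmult_le_pos; apply pow_le; try lra. apply pos_INR. }
    specialize (IHp n).
    assert (Hfp : 0 < (1 - g) ^ S p) by (apply pow_lt; lra).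
    assert ((1 - g) * G (S p) g n <= INR (S p) * (INR (fact p) / (1 - g) ^ S p)).
    { eapply Rle_trans. 2: apply Rmult_le_compat_l. 3: exact IHp. lra. apply pos_INR. }
    replace (INR (fact (S p)) / (1 - g) ^ S (S p)) with (INR (S p) * (INR (fact p) / (1 - g) ^ S p) / (1 - g)).
    2: { assert (Hp0 : (1-g)^p <> 0) by (apply pow_nonzero; lra).
         rewrite fact_simpl, mult_INR. simpl pow. field. repeat split; try lra; auto. }
    apply (Rmult_le_reg_l (1 - g)). lra.
    replace ((1 - g) * (INR (S p) * (INR (fact p) / (1 - g) ^ S p) / (1 - g))) with
      (INR (S p) * (INR (fact p) / (1 - g) ^ S p)) by (field; lra).
    lra.
Qed.

Definition UCB (s : nat -> R -> C) (D : R -> Prop) :=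
  (forall eps, 0 < eps -> exists N, forall n m x, D x -> (N <= n)%nat -> (N <= m)%nat ->
      Cmod (s n x - s m x) < eps)
  /\ exists B, 0 <= B /\ forall n x, D x -> Cmod (s n x) <= B.

Lemma UCB_UC s D : UCB s D -> UC s D.
Proof.
  intros [H _]. split; intros eps; destruct (H eps (cond_pos eps)) as [N HN]; exists N;
  intros n m x Dx Hn Hm; specialize (HN n m x Dx Hn Hm);
  pose proof (Rmax_Cmod (s n x - s m x)%C) as M;
  destruct (s n x) as [a b], (s m x) as [c d]; simpl in *.
  - eapply Rle_lt_trans. 2: exact HN. eapply Rle_trans. 2: exact M. apply Rmax_l.
  - eapply Rle_lt_trans. 2: exact HN. eapply Rle_trans. 2: exact M. apply Rmax_r.
Qed.

Lemma UCB_ext s r D : (forall n x, D x -> s n x = r n x) -> UCB s D -> UCB r D.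
Proof.
  intros E [H1 [B [HB H2]]]. split.
  - intros eps He. destruct (H1 eps He) as [N HN]. exists N. intros n m x Dx Hn Hm.
    rewrite <- !E by auto. auto.
  - exists B. split; auto. intros n x Dx. rewrite <- E by auto. auto.
Qed.

Lemma UCB_const c D : UCB (fun _ _ => c) D.
Proof.
  split.
  - intros eps He. exists 0%nat. intros n m x _ _ _. cbv beta. replace (Cminus c c) with (RtoC 0) by ring. rewrite Cmod_0. lra.
  - exists (Cmod c). split. apply Cmod_ge_0. intros; lra.
Qed.

Lemma UCB_plus s r D : UCB s D -> UCB r D -> UCB (fun n x => s n x + r n x)%C D.
Proof.
  intros [S1 [B1 [HB1 S2]]] [R1 [B2 [HB2 R2]]]. split.
  - intros eps He.
    destruct (S1 (eps/2) ltac:(lra)) as [N1 HN1]. destruct (R1 (eps/2) ltac:(lra)) as [N2 HN2].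
    exists (max N1 N2). intros n m x Dx Hn Hm.
    specialize (HN1 n m x Dx ltac:(lia) ltac:(lia)). specialize (HN2 n m x Dx ltac:(lia) ltac:(lia)).
    replace (s n x + r n x - (s m x + r m x))%C with ((s n x - s m x) + (r n x - r m x))%C by ring.
    eapply Rle_lt_trans. apply Cmod_triangle. lra.
  - exists (B1 + B2). split. lra. intros n x Dx.
    eapply Rle_trans. apply Cmod_triangle. specialize (S2 n x Dx). specialize (R2 n x Dx). lra.
Qed.

Lemma UCB_mult s r D : UCB s D -> UCB r D -> UCB (fun n x => s n x * r n x)%C D.
Proof.
  intros [S1 [B1 [HB1 S2]]] [R1 [B2 [HB2 R2]]]. split.
  - intros eps He.
    set (e' := eps / (B1 + B2 + 1)).
    assert (He' : 0 < e') by (unfold e'; apply Rdiv_lt_0_compat; lra).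
    destruct (S1 e' He') as [N1 HN1]. destruct (R1 e' He') as [N2 HN2].
    exists (max N1 N2). intros n m x Dx Hn Hm.
    specialize (HN1 n m x Dx ltac:(lia) ltac:(lia)). specialize (HN2 n m x Dx ltac:(lia) ltac:(lia)).
    replace (s n x * r n x - s m x * r m x)%C with (s n x * (r n x - r m x) + r m x * (s n x - s m x))%C by ring.
    eapply Rle_lt_trans. apply Cmod_triangle. rewrite !Cmod_mult.
    pose proof (S2 n x Dx). pose proof (R2 m x Dx).
    pose proof (Cmod_ge_0 (s n x)). pose proof (Cmod_ge_0 (r m x)).
    pose proof (Cmod_ge_0 (r n x - r m x)%C). pose proof (Cmod_ge_0 (s n x - s m x)%C).
    assert (Cmod (s n x) * Cmod (r n x - r m x) <= B1 * e') by (apply Rmult_le_compat; lra).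
    assert (Cmod (r m x) * Cmod (s n x - s m x) <= B2 * e') by (apply Rmult_le_compat; lra).
    assert ((B1 + B2) * e' < eps).
    { unfold e'. replace ((B1 + B2) * (eps / (B1 + B2 + 1))) with (eps * ((B1 + B2) / (B1 + B2 + 1))) by (field; lra).
      assert ((B1 + B2) / (B1 + B2 + 1) < 1).
      { apply (Rmult_lt_reg_r (B1 + B2 + 1)). lra. unfold Rdiv. rewrite Rmult_assoc, Rinv_l by lra. lra. }
      nra. }
    lra.
  - exists (B1 * B2). split. nra. intros n x Dx. rewrite Cmod_mult.
    apply Rmult_le_compat; auto; apply Cmod_ge_0.
Qed.

Lemma UCB_ev {A} (val : A -> nat -> R -> C) D : (forall a, UCB (val a) D) ->
  forall e, UCB (fun n x => ev (fun a => val a n x) e) D.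
Proof.
  intros H e. induction e as [a| | |e1 IH1 e2 IH2|e1 IH1 e2 IH2]; simpl.
  - apply H.
  - apply UCB_const.
  - apply UCB_const.
  - apply (UCB_plus _ _ _ IH1 IH2).
  - apply (UCB_mult _ _ _ IH1 IH2).
Qed.

Lemma sumC_zero (f : nat -> C) n : (forall i, (i < n)%nat -> f i = 0%C) -> sumC f n = 0%C.
Proof.
  induction n; simpl; intros H; auto. rewrite IHn by (intros; apply H; lia). rewrite H by lia. ring.
Qed.

Lemma sumC_diff (f : nat -> C) n m : (n <= m)%nat ->
  (sumC f m - sumC f n)%C = sumC (fun i => if Nat.leb n i then f i else 0%C) m.
Proof.
  induction m; intros H.
  - assert (n = 0%nat) by lia. subst. simpl. ring.
  - destruct (Nat.eq_dec n (S m)) as [E|E].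
    + subst. rewrite (sumC_zero (fun i => if Nat.leb (S m) i then f i else 0%C)). ring. intros i Hi. destruct (Nat.leb_spec (S m) i); [lia|auto].
    + simpl. rewrite <- IHm by lia. destruct (Nat.leb_spec n m); [|lia]. ring.
Qed.

Lemma sumR_mono_n f n m : (n <= m)%nat -> (forall i, 0 <= f i) -> sumR f n <= sumR f m.
Proof.
  intros H Hf. induction m.
  - assert (n = 0%nat) by lia. subst; lra.
  - destruct (Nat.eq_dec n (S m)) as [E|E]. subst; lra.
    simpl. specialize (IHm ltac:(lia)). specialize (Hf m). lra.
Qed.

Lemma pow_le_1 x n : 0 <= x <= 1 -> x ^ n <= 1.
Proof. intros H. induction n; simpl. lra. assert (0 <= x^n) by (apply pow_le; lra). nra. Qed.

Lemma pow_decr x n m : 0 <= x <= 1 -> (n <= m)%nat -> x ^ m <= x ^ n.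
Proof.
  intros Hx Hnm. replace m with (n + (m - n))%nat by lia. rewrite pow_add.
  assert (0 <= x ^ n) by (apply pow_le; lra).
  assert (x ^ (m - n) <= 1) by (apply pow_le_1; lra).
  assert (0 <= x ^ (m - n)) by (apply pow_le; lra). nra.
Qed.

Lemma UCB_sum (g : nat -> R -> C) D K p b : 0 < b < 1 -> 0 <= K ->
  (forall i x, D x -> Cmod (g i x) <= K * (INR (S i) ^ p * b ^ (S i))) ->
  UCB (fun n x => sumC (fun i => g i x) n) D.
Proof.
  intros Hb HK Hg.
  set (c := INR (fact p) / (1 - sqrt b) ^ S p).
  assert (Hsb : 0 < sqrt b < 1).
  { split. apply sqrt_lt_R0; lra. rewrite <- sqrt_1. apply sqrt_lt_1; lra. }
  assert (Hc : 0 <= c).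
  { unfold c. apply Rmult_le_pos. apply pos_INR. apply Rlt_le, Rinv_0_lt_compat, pow_lt. lra. }
  assert (Hbb : forall k, b ^ k = sqrt b ^ k * sqrt b ^ k).
  { intros k. rewrite <- Rpow_mult_distr. rewrite sqrt_sqrt by lra. reflexivity. }
  split.
  - intros eps He.
    assert (Hq : 0 < eps / (K * c + 1)) by (apply Rdiv_lt_0_compat; nra).
    destruct (pow_lt_1_zero (sqrt b) ltac:(rewrite Rabs_pos_eq; lra) _ Hq) as [N HN].
    exists N.
    assert (Main : forall n m x, D x -> (N <= n)%nat -> (n <= m)%nat ->
              Cmod (sumC (fun i => g i x) m - sumC (fun i => g i x) n) < eps).
    { intros n m x Dx Hn Hm. rewrite sumC_diff by auto.
      eapply Rle_lt_trans. apply Cmod_sumC.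
      assert (Hsn : 0 <= sqrt b ^ n) by (apply pow_le; lra).
      eapply Rle_lt_trans.
      apply (sumR_le _ (fun i => K * sqrt b ^ n * (INR (S i) ^ p * sqrt b ^ S i))).
      { intros i Hi. destruct (Nat.leb_spec n i).
        - eapply Rle_trans. apply Hg; auto. rewrite Hbb.
          assert (sqrt b ^ S i <= sqrt b ^ n) by (apply pow_decr; lra || lia).
          assert (0 <= INR (S i) ^ p) by (apply pow_le, pos_INR).
          assert (0 <= sqrt b ^ S i) by (apply pow_le; lra).
          replace (K * (INR (S i) ^ p * (sqrt b ^ S i * sqrt b ^ S i))) with
            (K * (INR (S i) ^ p * sqrt b ^ S i) * sqrt b ^ S i) by ring.
          replace (K * sqrt b ^ n * (INR (S i) ^ p * sqrt b ^ S i)) with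
            (K * (INR (S i) ^ p * sqrt b ^ S i) * sqrt b ^ n) by ring.
          apply Rmult_le_compat_l; auto. apply Rmult_le_pos; auto. apply Rmult_le_pos; auto.
        - rewrite Cmod_0. apply Rmult_le_pos. apply Rmult_le_pos; auto.
          apply Rmult_le_pos. apply pow_le, pos_INR. apply pow_le; lra. }
      rewrite sumR_scal.
      pose proof (G_bound p (sqrt b) m ltac:(lra)) as GB. unfold G in GB.
      specialize (HN n ltac:(lia)). rewrite Rabs_pos_eq in HN by auto.
      assert (K * sqrt b ^ n * sumR (fun i => INR (S i) ^ p * sqrt b ^ S i) m <= eps / (K * c + 1) * (K * c)).
      { rewrite Rmult_comm. rewrite (Rmult_comm (eps / (K * c + 1))).
        replace (sumR (fun i : nat => INR (S i) ^ p * sqrt b ^ S i) m * (K * sqrt b ^ n)) with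
          (K * sumR (fun i : nat => INR (S i) ^ p * sqrt b ^ S i) m * sqrt b ^ n) by ring.
        apply Rmult_le_compat; auto.
        apply Rmult_le_pos; auto. apply sumR_nonneg. intros; apply Rmult_le_pos; apply pow_le; try lra. apply pos_INR.
        apply Rmult_le_compat_l; auto. lra. }
      assert (eps / (K * c + 1) * (K * c) < eps).
      { replace (eps / (K * c + 1) * (K * c)) with (eps * (K * c / (K * c + 1))) by (field; nra).
        assert (K * c / (K * c + 1) < 1).
        { apply (Rmult_lt_reg_r (K * c + 1)). nra. unfold Rdiv. rewrite Rmult_assoc, Rinv_l by nra. nra. }
        nra. }
      lra. }
    intros n m x Dx Hn Hm. destruct (Nat.le_ge_cases n m) as [L|L].
    + rewrite <- Cmod_opp. replace (- (sumC (fun i => g i x) n - sumC (fun i => g i x) m))%C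
        with (sumC (fun i => g i x) m - sumC (fun i => g i x) n)%C by ring. apply Main; auto.
    + apply Main; auto.
  - exists (K * c). split. nra. intros n x Dx.
    eapply Rle_trans. apply Cmod_sumC.
    eapply Rle_trans. apply (sumR_le _ (fun i => K * (INR (S i) ^ p * b ^ S i))).
    intros; apply Hg; auto. rewrite sumR_scal. apply Rmult_le_compat_l; auto.
    eapply Rle_trans. 2: apply (G_bound p (sqrt b) n ltac:(lra)). unfold G.
    apply sumR_le. intros i Hi. apply Rmult_le_compat_l. apply pow_le, pos_INR.
    rewrite Hbb. assert (0 <= sqrt b ^ S i) by (apply pow_le; lra).
    assert (sqrt b ^ S i <= 1) by (apply pow_le_1; lra).
    nra.
Qed.

Lemma sumC_ext (f g : nat -> C) n : (forall i, (i < n)%nat -> f i = g i) -> sumC f n = sumC g n.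
Proof. induction n; simpl; intros H; auto. rewrite IHn, H by (auto; lia). reflexivity. Qed.

Lemma sumC_scal (c : C) (f : nat -> C) n : sumC (fun i => c * f i)%C n = (c * sumC f n)%C.
Proof. induction n; simpl. ring. rewrite IHn. ring. Qed.

Lemma hasD_sumC (g : nat -> R -> C) (d : nat -> C) x n :
  (forall i, (i < n)%nat -> hasD (g i) x (d i)) ->
  hasD (fun y => sumC (fun i => g i y) n) x (sumC d n).
Proof.
  induction n; intros H; simpl.
  - apply hasD_const.
  - apply (hasD_plus (fun y => sumC (fun i => g i y) n) (g n)).
    apply IHn; intros; apply H; lia. apply H; lia.
Qed.

Lemma hasD_prodC (g : nat -> R -> C) (e : nat -> C) x n :
  (forall i, (i < n)%nat -> hasD (g i) x (g i x * e i)%C) ->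
  hasD (fun y => prodC (fun i => g i y) n) x (prodC (fun i => g i x) n * sumC e n)%C.
Proof.
  induction n; intros H; simpl.
  - eapply hasD_eq. apply hasD_const. ring.
  - eapply hasD_eq.
    apply (hasD_mult (fun y => prodC (fun i => g i y) n) (g n)).
    apply IHn; intros; apply H; lia. apply H; lia. ring.
Qed.

Definition aZ (m j : nat) : Z := (2 * Z.of_nat j + 1 - Z.of_nat m)%Z.
Definition wf (t : C) (m j : nat) (x : R) : C := (zpowC (RtoC x) (aZ m j) * Cpow t m)%C.
Definition vf (t : C) (m j : nat) (x : R) : C := Cinv (1 - wf t m j x)%C.
Definition Pf (t : C) (n : nat) (x : R) : C :=
  prodC (fun i => prodC (fun j => vf t (S i) j x) (S i)) n.

Lemma Pf_M0 t n x : M0_partial t (RtoC x) n = Pf t n x.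
Proof. reflexivity. Qed.

Lemma Cpow_RtoC (x : R) n : Cpow (RtoC x) n = RtoC (x ^ n).
Proof. induction n; simpl. reflexivity. rewrite IHn. rewrite RtoC_mult. reflexivity. Qed.

Lemma zpowC_real x a : 0 < x -> zpowC (RtoC x) a = RtoC (powerRZ x a).
Proof.
  intros Hx. destruct a as [|p|p]; simpl.
  - reflexivity.
  - apply Cpow_RtoC.
  - rewrite Cpow_RtoC. rewrite RtoC_inv. reflexivity.
    apply pow_nonzero. lra.
Qed.

Lemma hasD_wf t m j x : 0 < x ->
  hasD (wf t m j) x (RtoC (IZR (aZ m j) / x) * wf t m j x)%C.
Proof.
  intros Hx. set (A := IZR (aZ m j)).
  assert (D1 : is_derive (fun y => exp (A * ln y)) x (exp (A * ln x) * (A * / x))).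
  { auto_derive. lra. field. lra. }
  pose proof (hasD_RtoC _ _ _ D1) as D2.
  pose proof (hasD_mult _ _ _ _ _ D2 (hasD_const (Cpow t m) x)) as D3.
  eapply hasD_ext_loc with (lo := 0) (hi := x + 1). lra.
  2: eapply hasD_eq. 2: exact D3.
  - intros y Hy. unfold wf. rewrite zpowC_real by lra. rewrite powerRZ_Rpower by lra. reflexivity.
  - unfold wf. rewrite zpowC_real by lra. rewrite powerRZ_Rpower by lra.
    unfold Rpower. rewrite !RtoC_mult. unfold Rdiv. rewrite RtoC_mult. fold A. ring.
Qed.

Lemma hasD_opp f x d : hasD f x d -> hasD (fun y => - f y)%C x (- d)%C.
Proof.
  intros [H1 H2]. split; simpl.
  - apply (is_derive_opp (fun y => fst (f y))); auto.
  - apply (is_derive_opp (fun y => snd (f y))); auto.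
Qed.

Lemma hasD_vf t m j x : 0 < x -> wf t m j x <> 1%C ->
  hasD (vf t m j) x (RtoC (IZR (aZ m j) / x) * (wf t m j x * (vf t m j x * vf t m j x)))%C.
Proof.
  intros Hx Hw.
  assert (D1 : hasD (fun y => 1 - wf t m j y)%C x (0 - RtoC (IZR (aZ m j) / x) * wf t m j x)%C).
  { unfold Cminus. apply hasD_plus. apply hasD_const.
    eapply hasD_eq. apply hasD_opp. apply (hasD_wf t m j x Hx). ring. }
  assert (Hnz : (1 - wf t m j x)%C <> 0%C).
  { intro E. apply Hw. apply Ceq_minus in E. 
    replace (wf t m j x) with (1 - (1 - wf t m j x))%C by ring. rewrite E. ring. }
  eapply hasD_eq. apply (hasD_inv _ _ _ D1 Hnz).
  unfold vf. ring.
Qed.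

Definition valF (t : C) (m k : nat) (b : bool) (y : R) : C := if b then wf t m k y else vf t m k y.
Definition Tj (j : nat) : ex bool := Nat.iter j (der dWV) (Mul (At true) (At false)).
Definition tau t j m k x := ev (fun b => valF t m k b x) (Tj j).
Definition coef (m k j : nat) : C := RtoC (IZR (aZ m k) ^ S j).
Definition Hf t j n x := sumC (fun i => sumC (fun k => coef (S i) k j * tau t j (S i) k x) (S i))%C n.
Fixpoint Qe (i : nat) : ex nat :=
  match i with
  | O => One
  | S i => Add (Mul (At 0%nat) (Qe i)) (der (fun j => At (S j)) (Qe i))
  end.
Definition uu t i n x := (Pf t n x * ev (fun j => Hf t j n x) (Qe i))%C.

Lemma sumC_div (f : nat -> C) c n : sumC (fun i => f i / c)%C n = (sumC f n / c)%C.
Proof. induction n; simpl. unfold Cdiv. ring. rewrite IHn. unfold Cdiv. ring. Qed.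

Lemma RtoC_nz x : x <> 0 -> RtoC x <> 0%C.
Proof. intros H E. apply H. injection E. auto. Qed.

Lemma hasD_tau t j m k x : 0 < x -> wf t m k x <> 1%C ->
  hasD (tau t j m k) x (RtoC (IZR (aZ m k) / x) * tau t (S j) m k x)%C.
Proof.
  intros Hx Hw. unfold tau.
  apply (der_correct dWV (valF t m k) (RtoC (IZR (aZ m k) / x)) x).
  intros b. destruct b; simpl.
  - apply hasD_wf; auto.
  - apply hasD_vf; auto.
Qed.

Definition good (t : C) (x : R) := 0 < x /\ forall m k, (k < m)%nat -> wf t m k x <> 1%C.

Lemma hasD_Hf t j n x : good t x ->
  hasD (Hf t j n) x (Hf t (S j) n x / RtoC x)%C.
Proof.
  intros [Hx Hw]. unfold Hf.
  eapply hasD_eq. apply hasD_sumC with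
    (d := fun i => sumC (fun k => (coef (S i) k (S j) * tau t (S j) (S i) k x / RtoC x)%C) (S i)).
  - intros i Hi. apply hasD_sumC. intros k Hk.
    eapply hasD_eq.
    apply (hasD_mult (fun _ => coef (S i) k j) (tau t j (S i) k) x 0%C _ (hasD_const _ x) (hasD_tau t j (S i) k x Hx (Hw _ _ Hk))).
    unfold coef. rewrite RtoC_div by lra. 
    change (IZR (aZ (S i) k) ^ S (S j)) with (IZR (aZ (S i) k) * IZR (aZ (S i) k) ^ S j).
    rewrite RtoC_mult. field. apply RtoC_nz; lra.
  - rewrite <- sumC_div. apply sumC_ext. intros i Hi. rewrite <- sumC_div. reflexivity.
Qed.

Lemma hasD_Pf t n x : good t x ->
  hasD (Pf t n) x (Pf t n x * Hf t 0 n x / RtoC x)%C.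
Proof.
  intros [Hx Hw]. unfold Pf.
  eapply hasD_eq. apply hasD_prodC with
    (e := (fun i => sumC (fun k => coef (S i) k 0 * tau t 0 (S i) k x) (S i) / RtoC x)%C).
  - intros i Hi.
    eapply hasD_eq. apply hasD_prodC with
      (e := (fun k => coef (S i) k 0 * tau t 0 (S i) k x / RtoC x)%C).
    + intros k Hk. eapply hasD_eq. apply hasD_vf; auto.
      unfold coef, tau, Tj; simpl. rewrite RtoC_div by lra. rewrite Rmult_1_r.
      field. apply RtoC_nz; lra.
    + rewrite sumC_div. reflexivity.
  - unfold Hf. rewrite sumC_div. unfold Cdiv. ring.
Qed.

Lemma hasD_uu t i n x : good t x ->
  hasD (uu t i n) x (uu t (S i) n x / RtoC x)%C.
Proof.
  intros G. pose proof G as [Hx Hw]. unfold uu.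
  assert (E : hasD (fun y => ev (fun j => Hf t j n y) (Qe i)) x
                 (/ RtoC x * ev (fun j => Hf t j n x) (der (fun j => At (S j)) (Qe i)))%C).
  { apply (der_correct (fun j => At (S j)) (fun j => Hf t j n) (/ RtoC x)%C x).
    intros j. simpl. eapply hasD_eq. apply hasD_Hf; auto. unfold Cdiv. ring. }
  eapply hasD_eq. apply (hasD_mult _ _ _ _ _ (hasD_Pf t n x G) E).
  simpl. unfold Cdiv. ring.
Qed.

Lemma aZ_abs m k : (k < m)%nat -> Rabs (IZR (aZ m k)) <= INR m - 1.
Proof.
  intros H. rewrite Rabs_Zabs. unfold aZ.
  assert (HZ : (Z.abs (2 * Z.of_nat k + 1 - Z.of_nat m) <= Z.of_nat m - 1)%Z) by lia.
  apply IZR_le in HZ. rewrite minus_IZR in HZ. rewrite <- INR_IZR_INZ in HZ. exact HZ.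
Qed.

Lemma aZ_absnat m k : (k < m)%nat -> (Z.abs_nat (aZ m k) <= m - 1)%nat.
Proof. intros H. unfold aZ. lia. Qed.

Lemma powerRZ_bound x a s : 0 < s < x -> x < / s -> s < 1 ->
  powerRZ x a <= (/ s) ^ (Z.abs_nat a).
Proof.
  intros H1 H2 H3. destruct a as [|p|p]; simpl.
  - lra.
  - apply pow_incr. lra.
  - rewrite <- pow_inv. apply pow_incr. split.
    apply Rlt_le, Rinv_0_lt_compat; lra. apply Rlt_le, Rinv_lt_contravar; nra.
Qed.

Lemma powerRZ_pos x a : 0 < x -> 0 < powerRZ x a.
Proof. intros H. apply powerRZ_lt. exact H. Qed.


Lemma hasW_Tj j : hasW (Tj j) = true.
Proof. induction j. reflexivity. unfold Tj in *. simpl. apply hasW_der. exact IHj. Qed.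

Lemma Cmod_1mw (w : C) : 1 - Cmod w <= Cmod (1 - w)%C.
Proof.
  pose proof (Cmod_triangle (1 - w)%C w) as H. replace (1 - w + w)%C with (RtoC 1) in H by ring.
  rewrite Cmod_1 in H. lra.
Qed.

Lemma vf_gen (w : C) : Cmod w < 1 -> Cmod (Cinv (1 - w))%C <= / (1 - Cmod w).
Proof.
  intros Hw. assert (H := Cmod_1mw w).
  assert (Hnz : (1 - w)%C <> 0%C).
  { intro E. rewrite E, Cmod_0 in H. lra. }
  rewrite Cmod_inv by auto. apply Rinv_le_contravar; lra.
Qed.

Lemma vf_minus1 (w : C) : Cmod w < 1 -> Cmod (Cinv (1 - w) - 1)%C <= Cmod w / (1 - Cmod w).
Proof.
  intros Hw. assert (H := Cmod_1mw w).
  assert (Hnz : (1 - w)%C <> 0%C).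
  { intro E. rewrite E, Cmod_0 in H. lra. }
  replace (Cinv (1 - w) - 1)%C with (w * Cinv (1 - w))%C by (field; auto).
  rewrite Cmod_mult. unfold Rdiv. apply Rmult_le_compat_l. apply Cmod_ge_0. apply vf_gen; auto.
Qed.

Lemma tau_bound j : exists K b, 0 <= K /\ forall t m k x, Cmod (wf t m k x) < 1 ->
  Cmod (tau t j m k x) <= K * Cmod (wf t m k x) * (/ (1 - Cmod (wf t m k x))) ^ b.
Proof.
  destruct (bound1 (Tj j)) as [K [b [HK H]]]. exists K, b. split; auto.
  intros t m k x Hw. unfold tau.
  specialize (H (wf t m k x) (vf t m k x) Hw (vf_gen _ Hw)). rewrite hasW_Tj in H.
  exact H.
Qed.

Lemma exp_mono x y : x <= y -> exp x <= exp y.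
Proof. intros H. destruct (Rle_lt_or_eq_dec _ _ H) as [L|L]. apply Rlt_le, exp_increasing, L. rewrite L; lra. Qed.

Lemma sumR_const c n : sumR (fun _ => c) n = INR n * c.
Proof. induction n; simpl sumR. simpl; ring. rewrite IHn, S_INR. ring. Qed.

Lemma prod_near1 (f : nat -> C) m e : 0 <= e -> (forall k, (k < m)%nat -> Cmod (f k - 1)%C <= e) ->
  Cmod (prodC f m - 1)%C <= (1 + e) ^ m - 1 /\ Cmod (prodC f m) <= (1 + e) ^ m.
Proof.
  intros He. induction m; intros H.
  - simpl. replace (1 - 1)%C with (RtoC 0) by ring. rewrite Cmod_0, Cmod_1. lra.
  - destruct IHm as [A B]. intros; apply H; lia.
    specialize (H m ltac:(lia)).
    assert (Hf : Cmod (f m) <= 1 + e).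
    { replace (f m) with ((f m - 1) + 1)%C by ring. eapply Rle_trans. apply Cmod_triangle. rewrite Cmod_1. lra. }
    assert (0 <= (1 + e) ^ m) by (apply pow_le; lra).
    simpl prodC. split.
    + replace (prodC f m * f m - 1)%C with ((prodC f m - 1) * f m + (f m - 1))%C by ring.
      eapply Rle_trans. apply Cmod_triangle. rewrite Cmod_mult.
      assert (Cmod (prodC f m - 1)%C * Cmod (f m) <= ((1 + e) ^ m - 1) * (1 + e)).
      { apply Rmult_le_compat; auto; apply Cmod_ge_0. }
      simpl pow. nra.
    + rewrite Cmod_mult. simpl pow. rewrite Rmult_comm.
      apply Rmult_le_compat; auto; apply Cmod_ge_0.
Qed.

Lemma exp_pow_nat x n : exp (INR n * x) = exp x ^ n.
Proof.
  induction n. simpl. rewrite Rmult_0_l. apply exp_0.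
  rewrite S_INR. replace ((INR n + 1) * x) with (INR n * x + x) by ring.
  rewrite exp_plus, IHn. simpl. ring.
Qed.

Lemma onepow_exp e m : 0 <= e -> (1 + e) ^ m <= exp (INR m * e).
Proof.
  intros He. rewrite exp_pow_nat. apply pow_incr. split. lra.
  pose proof (exp_ineq1_le e). lra.
Qed.

Lemma onepow_m1 e m : 0 <= e -> (1 + e) ^ m - 1 <= INR m * e * (1 + e) ^ m.
Proof.
  intros He. induction m.
  - simpl. lra.
  - rewrite S_INR. simpl pow.
    assert (1 <= (1 + e) ^ m) by (apply pow_R1_Rle; lra).
    nra.
Qed.

Lemma term_le_G p g n : 0 <= g -> INR (S n) ^ p * g ^ S n <= G p g (S n).
Proof.
  intros Hg. unfold G. rewrite sumR_S.
  assert (0 <= sumR (fun i => INR (S i) ^ p * g ^ S i) n).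
  { apply sumR_nonneg. intros. apply Rmult_le_pos; apply pow_le; auto. apply pos_INR. }
  lra.
Qed.

Lemma Pf_telescope t n x : Pf t n x = (1 + sumC (fun i => Pf t (S i) x - Pf t i x) n)%C.
Proof. induction n. unfold Pf; simpl. ring. simpl sumC.
  transitivity (Pf t n x + (Pf t (S n) x - Pf t n x))%C. ring. rewrite IHn at 1. ring. Qed.

Section Bounds.
Variable t : C.
Hypothesis Ht : 0 < Cmod t < 1.
Let s := sqrt (Cmod t).
Lemma s_props : 0 < s < 1 /\ s * s = Cmod t.
Proof.
  unfold s. split. split. apply sqrt_lt_R0; lra. rewrite <- sqrt_1. apply sqrt_lt_1; lra.
  apply sqrt_sqrt. lra.
Qed.

Definition inI (x : R) := s < x < / s.

Lemma wf_bound m k x : (k < m)%nat -> inI x -> Cmod (wf t m k x) <= s ^ S m.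
Proof.
  intros Hk [Hx1 Hx2]. destruct s_props as [[Hs0 Hs1] Hss].
  unfold wf. rewrite Cmod_mult, zpowC_real by lra. rewrite Cmod_R, Cmod_pow.
  rewrite Rabs_pos_eq by (apply Rlt_le, powerRZ_pos; lra).
  assert (P1 : powerRZ x (aZ m k) <= (/ s) ^ (m - 1)).
  { eapply Rle_trans. apply (powerRZ_bound x _ s); auto.
    apply Rle_pow. rewrite <- Rinv_1. apply Rinv_le_contravar; lra. apply aZ_absnat; auto. }
  rewrite <- Hss.
  destruct m as [|m']. lia. replace (S m' - 1)%nat with m' in P1 by lia.
  assert (0 <= (s * s) ^ S m') by (apply pow_le; nra).
  eapply Rle_trans. apply Rmult_le_compat_r. auto. exact P1.
  rewrite Rpow_mult_distr. replace (S (S m')) with (m' + 2)%nat by lia.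
  replace (s ^ S m' * s ^ S m') with (s ^ m' * s ^ (m' + 2)).
  2: { rewrite !pow_add. simpl. ring. }
  rewrite <- Rmult_assoc, <- Rpow_mult_distr, Rinv_l by lra. rewrite pow1. lra.
Qed.


Lemma s_pow_le m : s ^ S m <= s.
Proof.
  destruct s_props as [[Hs0 Hs1] _]. simpl. assert (s ^ m <= 1) by (apply pow_le_1; lra).
  assert (0 <= s ^ m) by (apply pow_le; lra). nra.
Qed.

Lemma wf_lt1 m k x : (k < m)%nat -> inI x -> Cmod (wf t m k x) < 1.
Proof.
  intros Hk Hx. pose proof (wf_bound m k x Hk Hx). pose proof (s_pow_le m).
  destruct s_props as [[Hs0 Hs1] _]. lra.
Qed.

Lemma good_I x : inI x -> good t x.
Proof.
  intros Hx. split.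
  - destruct Hx. destruct s_props as [[Hs0 Hs1] _]. lra.
  - intros m k Hk E. pose proof (wf_lt1 m k x Hk Hx) as L. rewrite E, Cmod_1 in L. lra.
Qed.

Lemma Hf_term_bound j : exists K, 0 <= K /\ forall i x, inI x ->
  Cmod (sumC (fun k => coef (S i) k j * tau t j (S i) k x)%C (S i)) <= K * (INR (S i) ^ (S (S j)) * s ^ (S i)).
Proof.
  destruct (tau_bound j) as [K [b [HK H]]].
  destruct s_props as [[Hs0 Hs1] _].
  set (c := (/ (1 - s)) ^ b).
  assert (Hc : 0 <= c) by (apply pow_le, Rlt_le, Rinv_0_lt_compat; lra).
  exists (K * c). split. nra. intros i x Hx.
  eapply Rle_trans. apply Cmod_sumC.
  eapply Rle_trans. apply (sumR_le _ (fun _ => INR (S i) ^ S j * (K * s ^ S i * c))).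
  - intros k Hk. rewrite Cmod_mult. apply Rmult_le_compat. apply Cmod_ge_0. apply Cmod_ge_0.
    + unfold coef. rewrite Cmod_R, <- RPow_abs. apply pow_incr. split. apply Rabs_pos.
      pose proof (aZ_abs (S i) k Hk). lra.
    + pose proof (wf_lt1 _ _ _ Hk Hx) as W1. pose proof (wf_bound _ _ _ Hk Hx) as W2.
      pose proof (s_pow_le (S i)) as W3.
      eapply Rle_trans. apply (H t (S i) k x W1).
      assert (Q : (/ (1 - Cmod (wf t (S i) k x))) ^ b <= c).
      { apply pow_incr. split. apply Rlt_le, Rinv_0_lt_compat; lra.
        apply Rinv_le_contravar; lra. }
      assert (Q0 : 0 <= (/ (1 - Cmod (wf t (S i) k x))) ^ b) by (apply pow_le, Rlt_le, Rinv_0_lt_compat; lra).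
      assert (W4 : Cmod (wf t (S i) k x) <= s ^ S i).
      { eapply Rle_trans. exact W2. apply pow_decr; lra || lia. }
      apply Rmult_le_compat; auto. apply Rmult_le_pos; auto. apply Cmod_ge_0.
      apply Rmult_le_compat_l; auto.
  - rewrite sumR_const. change (INR (S i) ^ S (S j)) with (INR (S i) * INR (S i) ^ S j). right. ring.
Qed.

Lemma UCB_Hf j : UCB (Hf t j) inI.
Proof.
  destruct (Hf_term_bound j) as [K [HK H]].
  destruct s_props as [[Hs0 Hs1] _].
  unfold Hf. apply (UCB_sum (fun i x => sumC (fun k => coef (S i) k j * tau t j (S i) k x)%C (S i)) inI K (S (S j)) s); auto.
Qed.

Lemma eps_nonneg n : 0 <= s ^ n / (1 - s).
Proof.
  destruct s_props as [[Hs0 Hs1] _].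
  apply Rmult_le_pos. apply pow_le; lra. apply Rlt_le, Rinv_0_lt_compat; lra.
Qed.

Lemma inner_near1 m x : inI x -> forall k, (k < m)%nat -> Cmod (vf t m k x - 1)%C <= s ^ m / (1 - s).
Proof.
  intros Hx k Hk. destruct s_props as [[Hs0 Hs1] _].
  unfold vf. eapply Rle_trans. apply vf_minus1. apply wf_lt1; auto.
  pose proof (wf_lt1 _ _ _ Hk Hx) as W1. pose proof (wf_bound _ _ _ Hk Hx) as W2.
  pose proof (s_pow_le m) as W3.
  assert (W4 : Cmod (wf t m k x) <= s ^ m).
  { eapply Rle_trans. exact W2. apply pow_decr; lra || lia. }
  assert (W5 : Cmod (wf t m k x) <= s).
  { eapply Rle_trans. exact W2. exact W3. }
  unfold Rdiv. apply Rmult_le_compat; auto. apply Cmod_ge_0.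
  apply Rlt_le, Rinv_0_lt_compat; lra. apply Rinv_le_contravar; lra.
Qed.

Lemma Pf_bound n x : inI x ->
  Cmod (Pf t n x) <= exp (sumR (fun i => INR (S i) * (s ^ S i / (1 - s))) n).
Proof.
  intros Hx. destruct s_props as [[Hs0 Hs1] _].
  induction n.
  - unfold Pf; simpl. rewrite exp_0. rewrite Cmod_1. lra.
  - assert (E : Pf t (S n) x = (Pf t n x * prodC (fun j => vf t (S n) j x) (S n))%C) by reflexivity.
    rewrite E, Cmod_mult, sumR_S, exp_plus.
    apply Rmult_le_compat. apply Cmod_ge_0. apply Cmod_ge_0. auto.
    destruct (prod_near1 (fun j => vf t (S n) j x) (S n) _ (eps_nonneg (S n)) (inner_near1 (S n) x Hx)) as [_ B].
    eapply Rle_trans. exact B. apply onepow_exp. apply eps_nonneg.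
Qed.

Definition c0 := / (1 - s) ^ 2 / (1 - s).

Lemma G1_bound n : G 1 s n <= / (1 - s) ^ 2.
Proof.
  destruct s_props as [[Hs0 Hs1] _].
  eapply Rle_trans. apply G_bound; lra. simpl. right. field. lra.
Qed.

Lemma c0_sum n : sumR (fun i => INR (S i) * (s ^ S i / (1 - s))) n <= c0.
Proof.
  destruct s_props as [[Hs0 Hs1] _].
  replace (sumR (fun i => INR (S i) * (s ^ S i / (1 - s))) n) with (/ (1 - s) * G 1 s n).
  2: { unfold G. rewrite <- sumR_scal. apply f_equal2; auto. apply functional_extensionality.
       intros i. simpl. field. lra. }
  unfold c0. rewrite Rmult_comm. unfold Rdiv. apply Rmult_le_compat_r.
  apply Rlt_le, Rinv_0_lt_compat; lra. apply G1_bound.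
Qed.

Lemma me_bound m : INR m * (s ^ m / (1 - s)) <= c0.
Proof.
  destruct s_props as [[Hs0 Hs1] _].
  destruct m. simpl. unfold c0. rewrite Rmult_0_l. apply Rmult_le_pos; apply Rlt_le, Rinv_0_lt_compat. apply pow_lt; lra. lra.
  pose proof (term_le_G 1 s m ltac:(lra)) as T. pose proof (G1_bound (S m)).
  unfold c0. replace (INR (S m) * (s ^ S m / (1 - s))) with (INR (S m) ^ 1 * s ^ S m * / (1 - s)) by (simpl; field; lra).
  unfold Rdiv. apply Rmult_le_compat_r. apply Rlt_le, Rinv_0_lt_compat; lra. lra.
Qed.

Lemma Pf_diff i x : inI x ->
  Cmod (Pf t (S i) x - Pf t i x)%C <= exp c0 * exp c0 / (1 - s) * (INR (S i) ^ 1 * s ^ S i).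
Proof.
  intros Hx. destruct s_props as [[Hs0 Hs1] _].
  assert (E : (Pf t (S i) x - Pf t i x)%C = (Pf t i x * (prodC (fun j => vf t (S i) j x) (S i) - 1))%C).
  { change (Pf t (S i) x) with (Pf t i x * prodC (fun j => vf t (S i) j x) (S i))%C. ring. }
  rewrite E, Cmod_mult.
  destruct (prod_near1 (fun j => vf t (S i) j x) (S i) _ (eps_nonneg (S i)) (inner_near1 (S i) x Hx)) as [A _].
  set (e := s ^ S i / (1 - s)) in *.
  assert (B1 : Cmod (Pf t i x) <= exp c0).
  { eapply Rle_trans. apply Pf_bound; auto. apply exp_mono. apply c0_sum. }
  assert (He : 0 <= e) by apply eps_nonneg.
  assert (B2 : (1 + e) ^ S i <= exp c0).
  { eapply Rle_trans. apply onepow_exp; auto.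
    apply exp_mono. exact (me_bound (S i)). }
  assert (B3 := onepow_m1 e (S i) He).
  assert (0 <= INR (S i) * e) by (apply Rmult_le_pos; auto; apply pos_INR).
  assert (B4 : Cmod (prodC (fun j => vf t (S i) j x) (S i) - 1)%C <= INR (S i) * e * exp c0).
  { eapply Rle_trans. exact A. eapply Rle_trans. exact B3. apply Rmult_le_compat_l; auto. }
  eapply Rle_trans. apply Rmult_le_compat. apply Cmod_ge_0. apply Cmod_ge_0. exact B1. exact B4.
  right. unfold e. simpl. field. lra.
Qed.

Lemma UCB_Pf : UCB (Pf t) inI.
Proof.
  destruct s_props as [[Hs0 Hs1] _].
  apply UCB_ext with (s := fun n x => (1 + sumC (fun i => Pf t (S i) x - Pf t i x) n)%C).
  { intros n x _. symmetry. apply Pf_telescope. }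
  apply (UCB_plus (fun _ _ => RtoC 1)). apply UCB_const.
  apply (UCB_sum (fun i x => Pf t (S i) x - Pf t i x)%C inI (exp c0 * exp c0 / (1 - s)) 1 s).
  lra. apply Rmult_le_pos. apply Rmult_le_pos; apply Rlt_le, exp_pos. apply Rlt_le, Rinv_0_lt_compat; lra.
  intros i x Hx. apply Pf_diff; auto.
Qed.

Lemma UCB_uu i : UCB (uu t i) inI.
Proof.
  unfold uu. apply (UCB_mult (Pf t) (fun n x => ev (fun j => Hf t j n x) (Qe i))).
  apply UCB_Pf. apply (UCB_ev (fun j => Hf t j)). intros; apply UCB_Hf.
Qed.

End Bounds.

Lemma filterlim_C (u : nat -> C) (l1 l2 : R) :
  is_lim_seq (fun n => fst (u n)) l1 -> is_lim_seq (fun n => snd (u n)) l2 ->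
  filterlim u eventually (locally ((l1, l2) : C)).
Proof.
  intros H1 H2. apply filterlim_locally. intros eps.
  apply is_lim_seq_spec in H1. apply is_lim_seq_spec in H2.
  specialize (H1 eps). specialize (H2 eps).
  eapply filter_imp. 2: exact (filter_and _ _ H1 H2). intros n [A B].
  split; simpl; unfold AbsRing_ball, abs, minus, plus, opp; simpl.
  - exact A.
  - exact B.
Qed.

Lemma seq_limC_eq (u : nat -> C) (l1 l2 : R) :
  is_lim_seq (fun n => fst (u n)) l1 -> is_lim_seq (fun n => snd (u n)) l2 ->
  seq_limC u = limC u.
Proof.
  intros H1 H2. pose proof (filterlim_C u l1 l2 H1 H2) as F.
  unfold seq_limC.
  assert (S := epsilon_spec (inhabits (RtoC 0)) (fun l : C => filterlim u eventually (locally l)) (ex_intro (fun l : C => filterlim u eventually (locally l)) ((l1, l2) : C) F)).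
  assert (E : limC u = ((l1, l2) : C)).
  { unfold limC. rewrite (is_lim_seq_unique _ _ H1), (is_lim_seq_unique _ _ H2). reflexivity. }
  rewrite E. symmetry. apply (filterlim_locally_unique (K:=C_AbsRing) (V:=C_NormedModule) u _ _ F S).
Qed.

Lemma lim_Cmod (u : nat -> C) (l1 l2 : R) :
  is_lim_seq (fun n => fst (u n)) l1 -> is_lim_seq (fun n => snd (u n)) l2 ->
  is_lim_seq (fun n => Cmod (u n)) (Cmod (l1, l2)).
Proof.
  intros H1 H2.
  assert (A : is_lim_seq (fun n => fst (u n) * fst (u n) + snd (u n) * snd (u n)) (l1 * l1 + l2 * l2)).
  { apply is_lim_seq_plus'; apply is_lim_seq_mult'; auto. }
  assert (Hp : 0 <= l1 * l1 + l2 * l2) by nra.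
  assert (B := is_lim_seq_continuous sqrt _ _ (continuity_pt_sqrt _ Hp) A).
  eapply is_lim_seq_ext with (u := fun n => sqrt (fst (u n) * fst (u n) + snd (u n) * snd (u n))).
  { intros n; unfold Cmod; f_equal; ring. }
  replace (Cmod (l1, l2)) with (sqrt (l1 * l1 + l2 * l2)) by (unfold Cmod; simpl; f_equal; ring).
  exact B.
Qed.

Lemma wf_at1 t m k : wf t m k 1 = Cpow t m.
Proof. unfold wf. rewrite zpowC_real by lra. rewrite powerRZ_R1. ring. Qed.

Lemma Hf_at1_bound j : exists K b, 0 <= K /\ forall t n, 0 < Cmod t < 1 ->
  Cmod (Hf t j n 1) <= K * (/ (1 - Cmod t)) ^ b * G (S (S j)) (Cmod t) n.
Proof.
  destruct (tau_bound j) as [K [b [HK H]]]. exists K, b. split; auto.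
  intros t n Ht. set (r := Cmod t).
  set (c := (/ (1 - r)) ^ b).
  assert (Hc : 0 <= c) by (apply pow_le, Rlt_le, Rinv_0_lt_compat; unfold r; lra).
  unfold Hf. eapply Rle_trans. apply Cmod_sumC. unfold G. rewrite <- sumR_scal.
  apply sumR_le. intros i Hi.
  eapply Rle_trans. apply Cmod_sumC.
  eapply Rle_trans. apply (sumR_le _ (fun _ => INR (S i) ^ S j * (K * r ^ S i * c))).
  - intros k Hk. rewrite Cmod_mult. apply Rmult_le_compat. apply Cmod_ge_0. apply Cmod_ge_0.
    + unfold coef. rewrite Cmod_R, <- RPow_abs. apply pow_incr. split. apply Rabs_pos.
      pose proof (aZ_abs (S i) k Hk). lra.
    + assert (W : Cmod (wf t (S i) k 1) = r ^ S i) by (rewrite wf_at1, Cmod_pow; reflexivity).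
      assert (W2 : r ^ S i <= r) by (rewrite <- (pow_1 r) at 2; apply (pow_decr r 1 (S i)); unfold r; lra || lia).
      assert (W3 : 0 <= r ^ S i) by (apply pow_le; unfold r; lra).
      assert (W1 : Cmod (wf t (S i) k 1) < 1) by (rewrite W; unfold r in *; lra).
      eapply Rle_trans. apply (H t (S i) k 1 W1). rewrite W.
      assert (Q : (/ (1 - r ^ S i)) ^ b <= c).
      { apply pow_incr. split. apply Rlt_le, Rinv_0_lt_compat; unfold r in *; lra.
        apply Rinv_le_contravar; unfold r in *; lra. }
      apply Rmult_le_compat_l; auto. apply Rmult_le_pos; auto.
  - rewrite sumR_const. change (INR (S i) ^ S (S j)) with (INR (S i) * INR (S i) ^ S j). right. ring.
Qed.

Lemma N_facts N : 1 <= N -> 0 < exp (- (1 / N)) < 1 /\ / (1 - exp (- (1 / N))) <= 2 * N.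
Proof.
  intros HN. set (u := 1 / N).
  assert (Hu : 0 < u <= 1).
  { unfold u. split. apply Rdiv_lt_0_compat; lra. unfold Rdiv. rewrite Rmult_1_l.
    rewrite <- Rinv_1. apply Rinv_le_contravar; lra. }
  assert (E1 : exp (- u) * exp u = 1) by (rewrite <- exp_plus; replace (-u + u) with 0 by ring; apply exp_0).
  pose proof (exp_ineq1_le u) as E2. pose proof (exp_pos (- u)) as E3.
  assert (L : exp (- u) <= / (1 + u)).
  { apply (Rmult_le_reg_r (1 + u)). lra. rewrite Rinv_l by lra. nra. }
  assert (L2 : / (1 + u) <= 1 - u / 2).
  { apply (Rmult_le_reg_r (1 + u)). lra. rewrite Rinv_l by lra. nra. }
  split. split; auto. lra.
  replace (2 * N) with (/ (u / 2)).
  2: { unfold u. field. lra. }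
  apply Rinv_le_contravar. lra. lra.
Qed.

Lemma HfN j : exists c p, 0 <= c /\ forall t n N, 1 <= N -> Cmod t = exp (- (1 / N)) ->
  Cmod (Hf t j n 1) <= c * N ^ p.
Proof.
  destruct (Hf_at1_bound j) as [K [b [HK H]]].
  exists (K * INR (fact (S (S j))) * 2 ^ b * 2 ^ S (S (S j))), (b + S (S (S j)))%nat.
  split. apply Rmult_le_pos. apply Rmult_le_pos. apply Rmult_le_pos; auto. apply pos_INR.
  apply pow_le; lra. apply pow_le; lra.
  intros t n N HN Ht. destruct (N_facts N HN) as [Hr Hq]. rewrite <- Ht in Hr, Hq.
  set (r := Cmod t) in *.
  eapply Rle_trans. apply H. exact Hr.
  assert (GB := G_bound (S (S j)) r n ltac:(lra)).
  assert (Hq0 : 0 <= / (1 - r)) by (apply Rlt_le, Rinv_0_lt_compat; lra).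
  assert (P1 : (/ (1 - r)) ^ b <= (2 * N) ^ b) by (apply pow_incr; lra).
  assert (P2 : INR (fact (S (S j))) / (1 - r) ^ S (S (S j)) <= INR (fact (S (S j))) * (2 * N) ^ S (S (S j))).
  { unfold Rdiv. rewrite <- pow_inv. apply Rmult_le_compat_l. apply pos_INR. apply pow_incr; lra. }
  assert (0 <= (/ (1 - r)) ^ b) by (apply pow_le; lra).
  assert (0 <= G (S (S j)) r n).
  { unfold G. apply sumR_nonneg. intros. apply Rmult_le_pos; apply pow_le. apply pos_INR. lra. }
  eapply Rle_trans. apply Rmult_le_compat_l. apply Rmult_le_pos; auto. exact GB.
  eapply Rle_trans. apply Rmult_le_compat. apply Rmult_le_pos; auto.
  apply Rmult_le_pos. apply pos_INR. apply Rlt_le, Rinv_0_lt_compat, pow_lt; lra.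
  apply Rmult_le_compat_l. exact HK. exact P1. exact P2.
  rewrite !Rpow_mult_distr, pow_add. right. ring.
Qed.

Definition Tpar := {th : C * nat * R | 1 <= snd th /\ Cmod (fst (fst th)) = exp (- (1 / snd th))}.

Lemma QN i : exists c p, 0 <= c /\ forall t n N, 1 <= N -> Cmod t = exp (- (1 / N)) ->
  Cmod (ev (fun j => Hf t j n 1) (Qe i)) <= c * N ^ p.
Proof.
  set (val := fun (th : Tpar) j => Hf (fst (fst (proj1_sig th))) j (snd (fst (proj1_sig th))) 1).
  set (Nf := fun (th : Tpar) => snd (proj1_sig th)).
  assert (H1 : forall th, 1 <= Nf th) by (intros [th Hth]; apply Hth).
  assert (H2 : forall j, exists c p, 0 <= c /\ forall th, Cmod (val th j) <= c * Nf th ^ p).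
  { intros j. destruct (HfN j) as [c [p [Hc H]]]. exists c, p. split; auto.
    intros [[[t n] N] [HN Ht]]. unfold val, Nf; simpl in *. apply H; auto. }
  destruct (bound2 val Nf H1 H2 (Qe i)) as [c [p [Hc H]]].
  exists c, p. split; auto. intros t n N HN Ht.
  exact (H (exist _ (t, n, N) (conj HN Ht))).
Qed.

Lemma Cinv_zero : Cinv (RtoC 0) = RtoC 0.
Proof. unfold Cinv, RtoC; simpl. f_equal; unfold Rdiv; ring. Qed.

Lemma prodC_ext (f g : nat -> C) n : (forall i, (i < n)%nat -> f i = g i) -> prodC f n = prodC g n.
Proof. induction n; simpl; intros H; auto. rewrite IHn, H by (auto; lia). reflexivity. Qed.

Lemma prodC_inv_const (z : C) m : z <> 0%C -> prodC (fun _ => Cinv z) m = Cinv (Cpow z m).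
Proof.
  intros Hz. induction m; simpl.
  - field. 
  - rewrite IHm. assert (Cpow z m <> 0%C) by (apply Cpow_nz; auto). field. auto.
Qed.

Lemma Mac_eq t : 0 < Cmod t < 1 ->
  prodC (fun i => Cinv (Cpow (1 - Cpow t (S i)) (S i))) = (fun n => Pf t n 1).
Proof.
  intros Ht. apply functional_extensionality. intros n. induction n.
  - reflexivity.
  - change (prodC (fun i => Cinv (Cpow (1 - Cpow t (S i)) (S i))) (S n)) with
      (prodC (fun i => Cinv (Cpow (1 - Cpow t (S i)) (S i))) n * Cinv (Cpow (1 - Cpow t (S n)) (S n)))%C.
    change (Pf t (S n) 1) with (Pf t n 1 * prodC (fun j => vf t (S n) j 1) (S n))%C.
    rewrite IHn. f_equal.
    rewrite (prodC_ext _ (fun _ => Cinv (1 - Cpow t (S n)))).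
    + symmetry. apply prodC_inv_const. intro E.
      assert (E2 : Cpow t (S n) = 1%C).
      { replace (Cpow t (S n)) with (1 - (1 - Cpow t (S n)))%C by ring. rewrite E. ring. }
      apply (f_equal Cmod) in E2. rewrite Cmod_pow, Cmod_1 in E2.
      assert (Cmod t ^ S n < 1) by (apply pow_lt_1_compat; lra || lia). lra.
    + intros i Hi. unfold vf. rewrite wf_at1. reflexivity.
Qed.

Lemma Fk_bound k c p : 0 <= c ->
  (forall t n N, 1 <= N -> Cmod t = exp (- (1 / N)) ->
     Cmod (ev (fun j => Hf t j n 1) (Qe k)) <= c * N ^ p) ->
  forall t N, 1 <= N -> Cmod t = exp (- (1 / N)) -> Cmod (Fk k t) <= c * N ^ p.
Proof.
  intros Hc HQ t N HN HtN.
  destruct (N_facts N HN) as [Hr _]. rewrite <- HtN in Hr.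
  destruct (s_props t Hr) as [[Hs0 Hs1] Hss].
  set (s := sqrt (Cmod t)) in *.
  assert (I1 : inI t 1).
  { unfold inI. fold s. split. lra. rewrite <- Rinv_1 at 1. apply Rinv_lt_contravar; lra. }
  assert (UP := UCB_UC _ _ (UCB_Pf t Hr)).
  assert (UU := fun i => UCB_UC _ _ (UCB_uu t Hr i)).
  assert (LP : forall x, inI t x ->
     is_lim_seq (fun n => fst (Pf t n x)) (real (Lim_seq (fun n => fst (Pf t n x)))) /\
     is_lim_seq (fun n => snd (Pf t n x)) (real (Lim_seq (fun n => snd (Pf t n x))))).
  { intros x Hx. destruct UP as [U1 U2]. split.
    apply (cauchy_lim (fun n x => fst (Pf t n x)) (inI t) x U1 Hx).
    apply (cauchy_lim (fun n x => snd (Pf t n x)) (inI t) x U2 Hx). }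
  assert (HM : Mk k t = limC (fun n => uu t k n 1)).
  { unfold Mk. apply (GEN (fun q => M0 t q) (uu t) s (/ s) Hs0).
    - intros i n x Hx. apply hasD_uu. apply (good_I t Hr). exact Hx.
    - intros i. exact (UU i).
    - intros x Hx. unfold M0. change (M0_partial t (RtoC x)) with (fun n => Pf t n x).
      destruct (LP x Hx) as [L1 L2].
      rewrite (seq_limC_eq _ _ _ L1 L2).
      unfold limC, uu. simpl ev. f_equal; f_equal; apply Lim_seq_ext; intros n; rewrite Cmult_1_r; reflexivity.
    - exact I1. }
  assert (HMac : MacMahon t = limC (fun n => Pf t n 1)).
  { unfold MacMahon. rewrite (Mac_eq t Hr). destruct (LP 1 I1) as [L1 L2].
    apply (seq_limC_eq _ _ _ L1 L2). }
  assert (Hineq : Cmod (limC (fun n => uu t k n 1)) <= c * N ^ p * Cmod (limC (fun n => Pf t n 1))).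
  { destruct (LP 1 I1) as [L1 L2].
    destruct (UU k) as [V1 V2].
    assert (M1 := cauchy_lim _ _ 1 V1 I1). assert (M2 := cauchy_lim _ _ 1 V2 I1).
    assert (A := lim_Cmod (fun n => uu t k n 1) _ _ M1 M2).
    assert (B := lim_Cmod (fun n => Pf t n 1) _ _ L1 L2).
    assert (B' := is_lim_seq_scal_l _ (c * N ^ p) _ B).
    assert (PW : forall n, Cmod (uu t k n 1) <= c * N ^ p * Cmod (Pf t n 1)).
    { intros n. unfold uu. rewrite Cmod_mult. specialize (HQ t n N HN HtN).
      rewrite (Rmult_comm (c * N ^ p)). apply Rmult_le_compat_l. apply Cmod_ge_0. exact HQ. }
    assert (R := is_lim_seq_le _ _ _ _ PW A B').
    simpl in R. exact R. }
  unfold Fk. rewrite HM, HMac.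
  set (L1 := limC (fun n => uu t k n 1)) in *. set (L2 := limC (fun n => Pf t n 1)) in *.
  assert (HcN : 0 <= c * N ^ p) by (apply Rmult_le_pos; auto; apply pow_le; lra).
  destruct (Req_dec (Cmod L2) 0) as [E|E].
  - apply Cmod_eq_0 in E. unfold Cdiv. rewrite E, Cinv_zero, Cmult_0_r, Cmod_0. exact HcN.
  - assert (Hnz : L2 <> 0%C) by (intro Z; apply E; rewrite Z; apply Cmod_0).
    rewrite Cmod_div by auto. pose proof (Cmod_ge_0 L2).
    apply (Rmult_le_reg_r (Cmod L2)). lra. unfold Rdiv. rewrite Rmult_assoc, Rinv_l by auto. lra.
Qed.

Lemma Cmod_cexp a y : Cmod (cexp_xy a y) = exp a.
Proof.
  unfold Cmod, cexp_xy; simpl fst; simpl snd.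
  replace ((exp a * cos y) ^ 2 + (exp a * sin y) ^ 2) with (exp a ^ 2).
  apply sqrt_pow2. apply Rlt_le, exp_pos.
  pose proof (sin2_cos2 y) as S. unfold Rsqr in S. 
  replace ((exp a * cos y) ^ 2 + (exp a * sin y) ^ 2) with (exp a ^ 2 * (sin y * sin y + cos y * cos y)) by ring.
  rewrite S. ring.
Qed.

Theorem lemma4 (k : nat) (hk : (0 < k)%nat) (hev : Nat.Even k) :
  exists N0 Ck Ak : R, 0 < N0 /\ 0 < Ck /\ 0 < Ak /\
    forall N y : R, N0 < N -> - PI < y <= PI -> 1 / N <= Rabs y ->
      Cmod (Fk k (cexp_xy (- (1 / N)) y)) < Ck * Rpower N Ak.
Proof.
  destruct (QN k) as [c [p [Hc H]]].
  exists 1, (c + 1), (INR (S p)). split; [lra|]. split; [lra|]. split; [apply lt_0_INR; lia|].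
  intros N y HN _ _.
  pose proof (Fk_bound k c p Hc H _ N (Rlt_le _ _ HN) (Cmod_cexp (- (1 / N)) y)) as B.
  rewrite Rpower_pow by lra.
  assert (P0 : 0 < N ^ p) by (apply pow_lt; lra).
  assert (P1 : N ^ p <= N ^ S p) by (apply Rle_pow; lra || lia).
  assert (c * N ^ p <= c * N ^ S p) by (apply Rmult_le_compat_l; auto).
  nra.
Qed.
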